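(* Let $D_n$ be the degree (in-degree) of the sink in a random series-parallel network of size $n$ generated by the binary model. Then for $n\ge1$ $$\mathbb{E}(D_n)=\frac{1+\sqrt2}{2}\binom{n+\sqrt2-2}{n-1}-\frac{\sqrt2-1}{2}\binom{n-\sqrt2-2}{n-1},$$ and consequently $\mathbb{E}(D_n)\sim\frac{1+\sqrt2}{2}\frac{n^{\sqrt2-1}}{\Gamma(\sqrt2)}$ as $n\to\infty$.
   Context: Binary (uniform binary saturation) model of series-parallel networks: directed graphs with a source and a sink, edges oriented towards the sink. At step $1$ the network is a single edge from the source to the sink. At step $n>1$ one of the $n-1$ edges $(x,y)$ is chosen uniformly at random. If $x$ has out-degree $1$, a new parallel edge $(x,y)$ is added; if $x$ has out-degree $2$, $(x,y)$ is replaced by $(x,z),(z,y)$ with $z$ a new vertex. The network after step $n$ has size $n$ ($n$ edges). Binomial coefficients with real upper argument: $\binom{a}{k}=a(a-1)\cdots(a-k+1)/k!$. *)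

(* Defs.v *)
From Stdlib Require Import Reals Lra Lia Arith List.
Import ListNotations.
Open Scope R_scope.

(* A network: list of directed edges (x,y) between vertices (nats), together
   with the next fresh vertex label.  Source = vertex 0, sink = vertex 1. *)
Definition network : Type := (list (nat * nat) * nat)%type.

Definition source : nat := 0%nat.
Definition sink : nat := 1%nat.

Definition net1 : network := ([(source, sink)], 2%nat).

Definition edges (G : network) : list (nat * nat) := fst G.

Definition outdeg (G : network) (v : nat) : nat :=
  length (filter (fun e => Nat.eqb (fst e) v) (edges G)).

Definition indeg (G : network) (v : nat) : nat :=
  length (filter (fun e => Nat.eqb (snd e) v) (edges G)).

Fixpoint replace_nth {A : Type} (l : list A) (i : nat) (a : A) : list A :=
  match l, i with
  | [], _ => []
  | _ :: t, O => a :: t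
  | h :: t, S j => h :: replace_nth t j a
  end.

Definition grow (G : network) (i : nat) : network :=
  let (es, z) := G in
  let (x, y) := nth i es (0%nat, 0%nat) in
  if Nat.eqb (outdeg G x) 1
  then (es ++ [(x, y)], z)                                  (* parallel edge *)
  else (replace_nth es i (x, z) ++ [(z, y)], S z).          (* subdivision *)

Definition Rsum_list (l : list R) : R := fold_right Rplus 0 l.

Fixpoint expect_after (s : nat) (f : network -> R) (G : network) : R :=
  match s with
  | O => f G
  | S s' =>
      / INR (length (edges G)) *
      Rsum_list (map (fun i => expect_after s' f (grow G i))
                     (seq 0 (length (edges G))))
  end.

(* E(D_n): expected in-degree of the sink in the network of size n
   (i.e. after step n, i.e. after n-1 growth steps from net1). *)
Definition ED (n : nat) : R :=
  expect_after (n - 1) (fun G => INR (indeg G sink)) net1.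

Fixpoint falling (a : R) (k : nat) : R :=
  match k with
  | O => 1
  | S j => falling a j * (a - INR j)
  end.

Definition gbinom (a : R) (k : nat) : R := falling a k / INR (fact k).

(* Euler's limit sequence for the Gamma function:
   Gamma(x) = lim_m m! m^x / (x (x+1) ... (x+m)),  x > 0. *)
Fixpoint rising_prod (x : R) (m : nat) : R :=
  match m with
  | O => x
  | S j => rising_prod x j * (x + INR (S j))
  end.

Definition gamma_seq (x : R) (m : nat) : R :=
  INR (fact m) * Rpower (INR m) x / rising_prod x m.

(* Main.v *)
Require Import Defs.
From Stdlib Require Import Reals Lra Lia Arith List.
From Coquelicot Require Import Coquelicot.
Import ListNotations.
Open Scope R_scope.

Definition cnt (h : nat * nat -> nat) (l : list (nat * nat)) : nat :=
  fold_right (fun e acc => (h e + acc)%nat) 0%nat l.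

Lemma cnt_app h l1 l2 : cnt h (l1 ++ l2) = (cnt h l1 + cnt h l2)%nat.
Proof. induction l1; simpl; auto. rewrite IHl1; lia. Qed.

Lemma cnt_ext_in h h' l : (forall e, In e l -> h e = h' e) -> cnt h l = cnt h' l.
Proof. induction l as [|a l IH]; simpl; intros H; [reflexivity|]. rewrite (H a (or_introl eq_refl)), IH; auto. Qed.

Lemma len_filter_cnt (p : nat*nat -> bool) l :
  length (filter p l) = cnt (fun e => if p e then 1%nat else 0%nat) l.
Proof. induction l; simpl; auto. destruct (p a); simpl; lia. Qed.

Definition odl (l : list (nat*nat)) (v : nat) : nat :=
  cnt (fun e => if Nat.eqb (fst e) v then 1%nat else 0%nat) l.

Lemma outdeg_odl l z v : outdeg (l, z) v = odl l v.
Proof. apply len_filter_cnt. Qed.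

Lemma odl_zero l v : odl l v = 0%nat -> forall e, In e l -> fst e <> v.
Proof.
  induction l; simpl; intros H e He; [contradiction|].
  destruct (Nat.eqb (fst a) v) eqn:E; [lia|].
  destruct He as [<-|He]; [apply Nat.eqb_neq; auto | apply IHl; auto].
Qed.

Lemma odl_pos l e : In e l -> (1 <= odl l (fst e))%nat.
Proof.
  induction l; simpl; intros He; [contradiction|].
  destruct He as [<-|He]. rewrite Nat.eqb_refl; lia.
  specialize (IHl He). unfold odl in *. lia.
Qed.

Definition hA (d : nat -> nat) (e : nat * nat) : nat :=
  if Nat.eqb (snd e) 1 then (if Nat.eqb (d (fst e)) 1 then 1 else 0) else 0.
Definition hB (d : nat -> nat) (e : nat * nat) : nat :=
  if Nat.eqb (snd e) 1 then (if Nat.eqb (d (fst e)) 2 then 1 else 0) else 0.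

Definition cA (G : network) : nat := cnt (hA (odl (edges G))) (edges G).
Definition cB (G : network) : nat := cnt (hB (odl (edges G))) (edges G).

Definition Inv (G : network) : Prop :=
  (forall v, (odl (edges G) v <= 2)%nat) /\
  (forall e, In e (edges G) -> (fst e < snd G)%nat) /\ (2 <= snd G)%nat.

Lemma cnt_split d l : (forall e, In e l -> (1 <= d (fst e) <= 2)%nat) ->
  cnt (fun e => if Nat.eqb (snd e) 1 then 1%nat else 0%nat) l = (cnt (hA d) l + cnt (hB d) l)%nat.
Proof.
  induction l; simpl; intros H; auto.
  rewrite IHl by auto. specialize (H a (or_introl eq_refl)).
  unfold hA, hB. destruct (Nat.eqb (snd a) 1); [|lia].
  destruct (Nat.eqb (d (fst a)) 1) eqn:E1; destruct (Nat.eqb (d (fst a)) 2) eqn:E2;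
  apply Nat.eqb_eq in E1 || apply Nat.eqb_neq in E1;
  apply Nat.eqb_eq in E2 || apply Nat.eqb_neq in E2; lia.
Qed.

Lemma indeg_AB G : Inv G -> indeg G sink = (cA G + cB G)%nat.
Proof.
  intros [H1 _]. unfold indeg, cA, cB. rewrite len_filter_cnt.
  apply cnt_split. intros e He. split; [apply odl_pos; auto| apply H1].
Qed.

Lemma odl_app_cons l1 l2 a b v :
  odl (l1 ++ (a,b)::l2) v = (odl l1 v + (if Nat.eqb a v then 1 else 0) + odl l2 v)%nat.
Proof. unfold odl. rewrite cnt_app. simpl. lia. Qed.

Lemma odl_app l1 l2 v : odl (l1 ++ l2) v = (odl l1 v + odl l2 v)%nat.
Proof. unfold odl. rewrite cnt_app. lia. Qed.

Lemma cnt_hA_same d d' l : (forall e, In e l -> d (fst e) = d' (fst e)) ->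
  cnt (hA d) l = cnt (hA d') l.
Proof. intros H. apply cnt_ext_in. intros e He. unfold hA. rewrite H; auto. Qed.
Lemma cnt_hB_same d d' l : (forall e, In e l -> d (fst e) = d' (fst e)) ->
  cnt (hB d) l = cnt (hB d') l.
Proof. intros H. apply cnt_ext_in. intros e He. unfold hB. rewrite H; auto. Qed.

Lemma eqb_case a b : (a = b /\ Nat.eqb a b = true) \/ (a <> b /\ Nat.eqb a b = false).
Proof. destruct (Nat.eqb a b) eqn:E; [left; split; auto; apply Nat.eqb_eq; auto|right; split; auto; apply Nat.eqb_neq; auto]. Qed.

Lemma par_case l1 l2 x y :
  odl (l1 ++ (x,y)::l2) x = 1%nat ->
  let l := l1 ++ (x,y)::l2 in let l' := l ++ [(x,y)] in
  (cnt (hA (odl l')) l' + hA (odl l) (x,y) = cnt (hA (odl l)) l + hB (odl l) (x,y))%nat /\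
  (cnt (hB (odl l')) l' + hB (odl l) (x,y) = cnt (hB (odl l)) l + 2 * hA (odl l) (x,y))%nat.
Proof.
  intros H l l'.
  assert (Hd : forall v, odl l' v = (odl l v + (if Nat.eqb x v then 1 else 0))%nat).
  { intros v. unfold l'. rewrite odl_app. unfold odl at 2. simpl. lia. }
  assert (H1 : odl l1 x = 0%nat /\ odl l2 x = 0%nat).
  { rewrite odl_app_cons, Nat.eqb_refl in H. lia. }
  assert (Hn : forall e, In e (l1 ++ l2) -> fst e <> x).
  { intros e He. apply in_app_or in He. destruct He; [apply (odl_zero l1)|apply (odl_zero l2)]; tauto. }
  assert (Hs : forall e, In e (l1 ++ l2) -> odl l (fst e) = odl l' (fst e)).
  { intros e He. rewrite Hd. specialize (Hn e He). destruct (eqb_case x (fst e)) as [[? ?]|[? E]]; [congruence|]. rewrite E; lia. }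
  assert (Hx : odl l x = 1%nat) by exact H.
  assert (Hx' : odl l' x = 2%nat) by (rewrite Hd, Hx, Nat.eqb_refl; reflexivity).
  set (d := odl l) in *. set (d' := odl l') in *. clearbody d d'.
  unfold l', l. rewrite !cnt_app. simpl.
  rewrite (cnt_hA_same d' d l1), (cnt_hA_same d' d l2),
    (cnt_hB_same d' d l1), (cnt_hB_same d' d l2);
    try (intros e He; symmetry; apply Hs; apply in_or_app; tauto).
  unfold hA, hB; simpl. rewrite Hx, Hx'; simpl. destruct (Nat.eqb y 1); lia.
Qed.

Lemma sub_case l1 l2 x y z :
  (forall e, In e (l1 ++ (x,y)::l2) -> (fst e < z)%nat) -> (2 <= z)%nat ->
  odl (l1 ++ (x,y)::l2) x = 2%nat ->
  let l := l1 ++ (x,y)::l2 in let l' := l1 ++ (x,z)::l2 ++ [(z,y)] in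
  (cnt (hA (odl l')) l' + hA (odl l) (x,y) = cnt (hA (odl l)) l + hB (odl l) (x,y))%nat /\
  (cnt (hB (odl l')) l' + hB (odl l) (x,y) = cnt (hB (odl l)) l + 2 * hA (odl l) (x,y))%nat.
Proof.
  intros Hz Hz2 H l l'.
  assert (Hd : forall v, odl l' v = (odl l v + (if Nat.eqb z v then 1 else 0))%nat).
  { intros v. unfold l', l. rewrite !odl_app_cons. change (odl [] v) with 0%nat. lia. }
  assert (Hxz : (x < z)%nat) by (apply (Hz (x,y)); apply in_or_app; simpl; auto).
  assert (Hs : forall e, In e (l1 ++ l2) -> odl l (fst e) = odl l' (fst e)).
  { intros e He. rewrite Hd. assert (fst e < z)%nat.
    { apply Hz. apply in_app_or in He. apply in_or_app. simpl. tauto. }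
    destruct (eqb_case z (fst e)) as [[? ?]|[? E]]; [lia|]. rewrite E; lia. }
  assert (H0 : odl l z = 0%nat).
  { assert (forall l0, (forall e, In e l0 -> (fst e < z)%nat) -> odl l0 z = 0%nat).
    { induction l0; simpl; intros; auto. unfold odl; simpl.
      destruct (eqb_case (fst a) z) as [[? ?]|[? E]]; [specialize (H0 a (or_introl eq_refl)); lia|].
      rewrite E. apply IHl0. auto. }
    apply H0. exact Hz. }
  assert (Hx : odl l x = 2%nat) by exact H.
  assert (Hx' : odl l' x = 2%nat).
  { rewrite Hd, Hx. destruct (eqb_case z x) as [[? ?]|[? E]]; [lia|]. rewrite E; lia. }
  assert (Hz' : odl l' z = 1%nat) by (rewrite Hd, H0, Nat.eqb_refl; reflexivity).
  set (d := odl l) in *. set (d' := odl l') in *. clearbody d d'.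
  unfold l', l. rewrite !cnt_app. simpl.
  rewrite !cnt_app; simpl. rewrite (cnt_hA_same d' d l1), (cnt_hA_same d' d l2),
    (cnt_hB_same d' d l1), (cnt_hB_same d' d l2);
    try (intros e He; symmetry; apply Hs; apply in_or_app; tauto).
  unfold hA, hB; simpl. rewrite Hx, Hx', Hz'; simpl.
  destruct (eqb_case z 1) as [[? ?]|[? E]]; [lia|]. rewrite E.
  destruct (Nat.eqb y 1); lia.
Qed.

Lemma odl_fresh l z : (forall e, In e l -> (fst e < z)%nat) -> odl l z = 0%nat.
Proof.
  induction l; simpl; intros H0; auto. unfold odl; simpl.
  destruct (eqb_case (fst a) z) as [[? ?]|[? E]]; [specialize (H0 a (or_introl eq_refl)); lia|].
  rewrite E. apply IHl. auto.
Qed.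

Lemma replace_nth_app (l1 l2 : list (nat*nat)) a b :
  replace_nth (l1 ++ a :: l2) (length l1) b = l1 ++ b :: l2.
Proof. induction l1; simpl; auto. rewrite IHl1; auto. Qed.

Lemma grow_step G i : Inv G -> (i < length (edges G))%nat ->
  Inv (grow G i) /\ length (edges (grow G i)) = S (length (edges G)) /\
  (cA (grow G i) + hA (odl (edges G)) (nth i (edges G) (0,0)) =
     cA G + hB (odl (edges G)) (nth i (edges G) (0,0)))%nat /\
  (cB (grow G i) + hB (odl (edges G)) (nth i (edges G) (0,0)) =
     cB G + 2 * hA (odl (edges G)) (nth i (edges G) (0,0)))%nat.
Proof.
  destruct G as [es z]. unfold Inv, edges, cA, cB. simpl fst. simpl snd.
  intros [Hod [Ht Hz]] Hi.
  destruct (nth_split es (0,0)%nat Hi) as (l1 & l2 & Heq & Hlen).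
  unfold grow. destruct (nth i es (0,0)%nat) as [x y] eqn:Ee.
  try rewrite Ee in Heq. subst es i. rewrite outdeg_odl.
  destruct (eqb_case (odl (l1 ++ (x, y) :: l2) x) 1) as [[H1 E]|[H1 E]]; rewrite E; simpl.
  - destruct (par_case l1 l2 x y H1) as [PA PB].
    split; [|split; [|split; assumption]].
    + split; [|split; auto].
      * intros v. rewrite odl_app. unfold odl at 2; simpl.
        destruct (eqb_case x v) as [[? E2]|[? E2]]; rewrite E2; [subst; lia|]. specialize (Hod v); lia.
      * intros e He. apply in_app_or in He. destruct He as [He|[He|[]]]; auto.
        subst e. apply (Ht (x,y)). apply in_or_app; simpl; auto.
    + rewrite length_app. simpl. lia.
  - assert (Hin : In (x,y) (l1 ++ (x,y) :: l2)) by (apply in_or_app; simpl; auto).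
    assert (H2 : odl (l1 ++ (x, y) :: l2) x = 2%nat).
    { pose proof (odl_pos _ _ Hin). simpl in H. specialize (Hod x). lia. }
    destruct (sub_case l1 l2 x y z Ht Hz H2) as [PA PB].
    rewrite replace_nth_app. rewrite <- app_assoc. simpl.
    split; [|split; [|split; assumption]].
    + split; [|split; [|lia]].
      * intros v. rewrite odl_app_cons, odl_app. change (odl [(z,y)] v) with ((if Nat.eqb z v then 1 else 0) + 0)%nat.
        pose proof (odl_fresh _ _ Ht) as F.
        specialize (Hod v). rewrite odl_app_cons in Hod, F.
        destruct (eqb_case z v) as [[? E2]|[? E2]]; rewrite E2; [subst|];
        destruct (eqb_case x v) as [[? E3]|[? E3]]; rewrite E3 in *; lia.
      * intros e He. apply in_app_or in He. simpl.
        destruct He as [He|[He|He]].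
        { enough (fst e < z)%nat by lia. apply Ht. apply in_or_app; auto. }
        { subst e. simpl. enough (x < z)%nat by lia. apply (Ht (x,y)); auto. }
        apply in_app_or in He. destruct He as [He|[He|[]]].
        { enough (fst e < z)%nat by lia. apply Ht. apply in_or_app; simpl; auto. }
        subst e; simpl; lia.
    + rewrite !length_app. simpl. rewrite length_app. simpl. lia.
Qed.

Lemma Rsum_shift (f : nat -> R) n :
  Rsum_list (map f (seq 0 (S n))) = f 0%nat + Rsum_list (map (fun i => f (S i)) (seq 0 n)).
Proof. simpl. f_equal. rewrite <- seq_shift, map_map. reflexivity. Qed.

Lemma Rsum_comb l (h1 h2 : nat*nat -> nat) c a b :
  Rsum_list (map (fun i => c + a * INR (h1 (nth i l (0,0)%nat)) + b * INR (h2 (nth i l (0,0)%nat)))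
    (seq 0 (length l))) = INR (length l) * c + a * INR (cnt h1 l) + b * INR (cnt h2 l).
Proof.
  induction l as [|e l IH].
  - simpl. ring.
  - simpl length. rewrite Rsum_shift. simpl nth. rewrite IH. simpl cnt.
    rewrite !plus_INR, S_INR. ring.
Qed.

Lemma Rsum_ext (f g : nat -> R) l : (forall i, In i l -> f i = g i) ->
  Rsum_list (map f l) = Rsum_list (map g l).
Proof. intros H. f_equal. apply map_ext_in. auto. Qed.

Definition stepf (f : network -> R) (H : network) : R :=
  / INR (length (edges H)) * Rsum_list (map (fun i => f (grow H i)) (seq 0 (length (edges H)))).

Lemma E_last s : forall f G, expect_after (S s) f G = expect_after s (stepf f) G.
Proof.
  induction s; intros f G; [reflexivity|].
  change (expect_after (S (S s)) f G) with
    (/ INR (length (edges G)) * Rsum_list (map (fun i => expect_after (S s) f (grow G i)) (seq 0 (length (edges G))))).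
  simpl expect_after at 2. f_equal. apply Rsum_ext. intros i _. apply IHs.
Qed.

Lemma E_ext s : forall k G f g, Inv G -> length (edges G) = S k ->
  (forall H, Inv H -> length (edges H) = S (s + k) -> f H = g H) ->
  expect_after s f G = expect_after s g G.
Proof.
  induction s; intros k G f g HI HL Hfg; simpl.
  - apply Hfg; auto.
  - f_equal. apply Rsum_ext. intros i Hi. apply in_seq in Hi.
    destruct (grow_step G i HI) as [HI' [HL' _]]; [lia|].
    apply (IHs (S k)); auto. rewrite HL', HL; auto.
    intros H H1 H2. apply Hfg; auto. rewrite H2. f_equal. lia.
Qed.

Lemma E_lin s : forall G f g a b,
  expect_after s (fun H => a * f H + b * g H) G = a * expect_after s f G + b * expect_after s g G.
Proof.
  induction s; intros; simpl; auto.
  rewrite (Rsum_ext _ (fun i => a * expect_after s f (grow G i) + b * expect_after s g (grow G i)))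
    by (intros; apply IHs).
  generalize (seq 0 (length (edges G))). intros l. induction l; simpl; [ring|].
  transitivity (/ INR (length (edges G)) * (a * expect_after s f (grow G a0) + b * expect_after s g (grow G a0))
     + / INR (length (edges G)) * Rsum_list (map (fun i : nat => a * expect_after s f (grow G i) + b * expect_after s g (grow G i)) l)); [ring|].
  rewrite IHl. ring.
Qed.

Lemma step_eigen (al be la : R) H :
  Inv H -> (1 <= length (edges H))%nat ->
  2 * be - al = la * al -> al - be = la * be ->
  stepf (fun G => al * INR (cA G) + be * INR (cB G)) H =
  (1 + la / INR (length (edges H))) * (al * INR (cA H) + be * INR (cB H)).
Proof.
  intros HI HL E1 E2. unfold stepf.
  set (l := edges H) in *.
  set (d := odl l).
  rewrite (Rsum_ext _ (fun i => (al * INR (cA H) + be * INR (cB H)) + (2 * be - al) * INR (hA d (nth i l (0,0)%nat))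
      + (al - be) * INR (hB d (nth i l (0,0)%nat)))).
  2:{ intros i Hi. apply in_seq in Hi.
      destruct (grow_step H i HI) as [_ [_ [PA PB]]]; [unfold l in Hi; lia|].
      fold l in PA, PB. fold d in PA, PB.
      apply (f_equal INR) in PA, PB. rewrite !plus_INR, mult_INR in *. simpl (INR 2) in PB.
      assert (XA : INR (cA (grow H i)) = INR (cA H) + INR (hB d (nth i l (0%nat, 0%nat))) - INR (hA d (nth i l (0%nat, 0%nat)))) by lra.
      assert (XB : INR (cB (grow H i)) = INR (cB H) + 2 * INR (hA d (nth i l (0%nat, 0%nat))) - INR (hB d (nth i l (0%nat, 0%nat)))) by lra.
      rewrite XA, XB. ring. }
  rewrite Rsum_comb. fold d.
  replace (cnt (hA d) l) with (cA H) by reflexivity.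
  replace (cnt (hB d) l) with (cB H) by reflexivity.
  assert (0 < INR (length l)) by (apply lt_0_INR; lia).
  rewrite E1, E2. field. lra.
Qed.

Fixpoint Pr (la : R) (s : nat) : R :=
  match s with O => 1 | S k => Pr la k * (1 + la / INR (S k)) end.

Lemma Inv_net1 : Inv net1.
Proof.
  unfold Inv, net1, edges, source, sink; split; [|split]; simpl.
  - intros v. unfold odl, cnt; simpl. destruct v; simpl; lia.
  - intros e [<-|[]]; simpl; lia.
  - lia.
Qed.

Lemma E_eigen al be la : 2 * be - al = la * al -> al - be = la * be ->
  forall s, expect_after s (fun G => al * INR (cA G) + be * INR (cB G)) net1 =
    Pr la s * (al * INR (cA net1) + be * INR (cB net1)).
Proof.
  intros E1 E2. induction s.
  - cbn [expect_after Pr]. ring.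
  - rewrite E_last.
    rewrite (E_ext s 0 net1 _ (fun H => (1 + la / INR (S s)) * (al * INR (cA H) + be * INR (cB H)) + 0 * (al * INR (cA H) + be * INR (cB H))))
      ; [| apply Inv_net1 | reflexivity |].
    + rewrite (E_lin s net1 (fun H => al * INR (cA H) + be * INR (cB H)) (fun H => al * INR (cA H) + be * INR (cB H))).
      rewrite IHs. change (Pr la (S s)) with (Pr la s * (1 + la / INR (S s))). ring.
    + intros H HI HL. rewrite (step_eigen al be la); auto; [|lia]. rewrite HL. rewrite Nat.add_0_r. ring.
Qed.

Lemma falling_shift k : forall a, falling (a + 1) (S k) = (a + 1) * falling a k.
Proof.
  induction k; intros a.
  - simpl. ring.
  - change (falling (a + 1) (S (S k))) with (falling (a+1) (S k) * (a + 1 - INR (S k))).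
    rewrite IHk. simpl falling. rewrite S_INR. ring.
Qed.

Lemma Q_Pr c s : gbinom (INR (S s) + c - 2) s = Pr (c - 1) s.
Proof.
  induction s.
  - unfold gbinom. simpl. field.
  - change (Pr (c - 1) (S s)) with (Pr (c-1) s * (1 + (c-1) / INR (S s))). rewrite <- IHs. unfold gbinom.
    replace (INR (S (S s)) + c - 2) with ((INR (S s) + c - 2) + 1) by (rewrite (S_INR (S s)); ring).
    rewrite falling_shift. rewrite fact_simpl, mult_INR.
    assert (0 < INR (fact s)) by (apply lt_0_INR; apply lt_O_fact).
    assert (0 < INR (S s)) by (apply lt_0_INR; lia).
    field. lra.
Qed.

Lemma ED_formula m :
  ED (S m) = (1 + sqrt 2) / 2 * gbinom (INR (S m) + sqrt 2 - 2) m
            - (sqrt 2 - 1) / 2 * gbinom (INR (S m) - sqrt 2 - 2) m.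
Proof.
  set (s := sqrt 2).
  assert (Hs : s * s = 2) by (apply sqrt_sqrt; lra).
  assert (Hs0 : 0 < s) by (apply sqrt_lt_R0; lra).
  unfold ED. replace (S m - 1)%nat with m by lia.
  rewrite (E_ext m 0 net1 _ (fun H => ((s+1)/(2*s)) * (s * INR (cA H) + 1 * INR (cB H))
        + ((s-1)/(2*s)) * ((-s) * INR (cA H) + 1 * INR (cB H)))); [| apply Inv_net1 | reflexivity |].
  2:{ intros H HI _. rewrite indeg_AB by auto. rewrite plus_INR. field. lra. }
  rewrite E_lin.
  rewrite (E_eigen s 1 (s - 1)), (E_eigen (-s) 1 (-s - 1)).
  all: try (first [ring | (replace (2*1) with (s*s) by (rewrite Hs; ring); ring)]).
  replace (INR (S m) - s - 2) with (INR (S m) + (- s) - 2) by ring.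
  rewrite !Q_Pr.
  replace (cA net1) with 1%nat by reflexivity.
  replace (cB net1) with 0%nat by reflexivity.
  simpl INR. replace (-s - 1) with (-s - 1) by ring. field. lra.
Qed.
Lemma R_pos x m : 0 < x -> 0 < rising_prod x m.
Proof.
  intros Hx. induction m; [simpl; auto|].
  change (rising_prod x (S m)) with (rising_prod x m * (x + INR (S m))).
  apply Rmult_lt_0_compat; auto. pose proof (pos_INR (S m)). lra.
Qed.

Lemma fact_pos m : 0 < INR (fact m).
Proof. apply lt_0_INR. apply lt_O_fact. Qed.

Lemma Pr_rising x m : 0 < x -> Pr (x - 1) m = rising_prod x m / ((x + INR m) * INR (fact m)).
Proof.
  intros Hx. induction m.
  - simpl. field. lra.
  - change (Pr (x - 1) (S m)) with (Pr (x-1) m * (1 + (x-1) / INR (S m))).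
    change (rising_prod x (S m)) with (rising_prod x m * (x + INR (S m))).
    rewrite IHm, fact_simpl, mult_INR, S_INR.
    pose proof (fact_pos m). pose proof (pos_INR m).
    field. repeat split; lra.
Qed.

Lemma Rpower_pos a b : 0 < Rpower a b.
Proof. unfold Rpower. apply exp_pos. Qed.

Lemma G_pos x m : 0 < x -> 0 < gamma_seq x m.
Proof.
  intros Hx. unfold gamma_seq. pose proof (fact_pos m). pose proof (Rpower_pos (INR m) x).
  pose proof (R_pos x m Hx). apply Rdiv_lt_0_compat; auto. apply Rmult_lt_0_compat; auto.
Qed.

Lemma Pr_gamma x m : 0 < x ->
  Pr (x - 1) m = Rpower (INR m) x / ((x + INR m) * gamma_seq x m).
Proof.
  intros Hx. rewrite Pr_rising by auto. unfold gamma_seq.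
  pose proof (fact_pos m). pose proof (Rpower_pos (INR m) x).
  pose proof (R_pos x m Hx). pose proof (pos_INR m).
  field. repeat split; lra.
Qed.

Definition delta (m : nat) : R := ln (INR (S m)) - ln (INR m).

Lemma ln_le_sub1 y : 0 < y -> ln y <= y - 1.
Proof. intros Hy. pose proof (exp_ineq1_le (ln y)). rewrite exp_ln in H; lra. Qed.

Lemma delta_bounds m : (1 <= m)%nat -> / INR (S m) <= delta m <= / INR m.
Proof.
  intros Hm. unfold delta.
  assert (H0 : 1 <= INR m) by (apply (le_INR 1); auto).
  rewrite S_INR. split.
  - assert (P : 0 < INR m / (INR m + 1)) by (apply Rdiv_lt_0_compat; lra).
    pose proof (ln_le_sub1 _ P).
    rewrite ln_div in H by lra.
    assert (INR m / (INR m + 1) - 1 = - / (INR m + 1)) by (field; lra).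
    lra.
  - assert (P : 0 < (INR m + 1) / INR m) by (apply Rdiv_lt_0_compat; lra).
    pose proof (ln_le_sub1 _ P).
    rewrite ln_div in H by lra.
    assert ((INR m + 1) / INR m - 1 = / INR m) by (field; lra).
    lra.
Qed.

Lemma G_succ x m : 0 < x -> (1 <= m)%nat ->
  gamma_seq x (S m) = gamma_seq x m * (INR (S m) * exp (x * delta m) / (x + INR (S m))).
Proof.
  intros Hx Hm. unfold gamma_seq, delta, Rpower.
  change (rising_prod x (S m)) with (rising_prod x m * (x + INR (S m))).
  rewrite fact_simpl, mult_INR.
  replace (x * (ln (INR (S m)) - ln (INR m))) with (x * ln (INR (S m)) + - (x * ln (INR m))) by ring.
  rewrite exp_plus, exp_Ropp.
  pose proof (R_pos x m Hx). pose proof (exp_pos (x * ln (INR m))).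
  pose proof (pos_INR (S m)). pose proof (fact_pos m).
  assert (0 < INR (S m)) by (apply lt_0_INR; lia).
  field. repeat split; lra.
Qed.

Lemma exp_le a b : a <= b -> exp a <= exp b.
Proof. intros H. destruct (Rle_lt_or_eq_dec _ _ H) as [H1|H1]. left; apply exp_increasing; auto. subst; lra. Qed.

Lemma G_incr x m : 0 < x -> (1 <= m)%nat -> gamma_seq x m <= gamma_seq x (S m).
Proof.
  intros Hx Hm. rewrite G_succ by auto.
  pose proof (G_pos x m Hx). pose proof (delta_bounds m Hm).
  assert (0 < INR (S m)) by (apply lt_0_INR; lia).
  pose proof (exp_ineq1_le (x * delta m)).
  assert (x * / INR (S m) <= x * delta m) by (apply Rmult_le_compat_l; lra).
  assert (x + INR (S m) <= INR (S m) * exp (x * delta m)).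
  { assert (INR (S m) * (1 + x * / INR (S m)) <= INR (S m) * exp (x * delta m)) by (apply Rmult_le_compat_l; lra).
    replace (INR (S m) * (1 + x * / INR (S m))) with (x + INR (S m)) in H4 by (field; lra). auto. }
  rewrite <- (Rmult_1_r (gamma_seq x m)) at 1.
  apply Rmult_le_compat_l; [lra|].
  apply (Rmult_le_reg_r (x + INR (S m))); [lra|].
  unfold Rdiv. rewrite Rmult_assoc, Rinv_l by lra. lra.
Qed.

Lemma G_dec x m : 0 < x -> x * (1 + x) <= 4 -> (1 <= m)%nat ->
  gamma_seq x (S m) * exp (4 / INR (S m)) <= gamma_seq x m * exp (4 / INR m).
Proof.
  intros Hx Hx4 Hm. rewrite G_succ by auto.
  pose proof (G_pos x m Hx). pose proof (delta_bounds m Hm).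
  assert (HN : INR (S m) = INR m + 1) by apply S_INR.
  assert (H1 : 1 <= INR m) by (apply (le_INR 1); auto).
  set (N := INR (S m)) in *. set (M := INR m) in *.
  assert (E1 : exp (x * delta m) <= exp (x / M)).
  { apply exp_le. unfold Rdiv. apply Rmult_le_compat_l; lra. }
  assert (E2 : N / (x + N) <= exp (- (x / (x + N)))).
  { pose proof (exp_ineq1_le (- (x / (x + N)))).
    replace (N / (x + N)) with (1 + - (x / (x + N))) by (field; lra). auto. }
  assert (E3 : x / M - x / (x + N) + 4 / N <= 4 / M).
  { assert (4 / M - (x / M - x / (x + N) + 4 / N) = (4 * x + N * (4 - x * (1 + x))) / (M * N * (x + N))) by (rewrite HN; field; lra).
    assert (0 <= (4 * x + N * (4 - x * (1 + x))) / (M * N * (x + N))).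
    { apply Rdiv_le_0_compat. nra. apply Rmult_lt_0_compat; [apply Rmult_lt_0_compat|]; lra. }
    lra. }
  assert (E4 : exp (x / M) * exp (- (x / (x + N))) * exp (4 / N) <= exp (4 / M)).
  { rewrite <- !exp_plus. apply exp_le. lra. }
  pose proof (exp_pos (x * delta m)). pose proof (exp_pos (4 / N)).
  replace (gamma_seq x m * (N * exp (x * delta m) / (x + N)) * exp (4 / N))
    with (gamma_seq x m * ((N / (x + N)) * exp (x * delta m) * exp (4 / N))) by (field; lra).
  apply Rmult_le_compat_l; [lra|].
  eapply Rle_trans; [|exact E4].
  apply Rmult_le_compat_r; [lra|].
  rewrite Rmult_comm. apply Rmult_le_compat; try lra.
  apply Rdiv_le_0_compat; lra.
Qed.

Lemma G_bound x m : 0 < x -> x * (1 + x) <= 4 ->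
  gamma_seq x (S m) <= gamma_seq x 1 * exp 4.
Proof.
  intros Hx Hx4.
  assert (forall m, gamma_seq x (S m) * exp (4 / INR (S m)) <= gamma_seq x 1 * exp 4).
  { induction m0.
    - simpl INR. replace (4/1) with 4 by field. lra.
    - eapply Rle_trans; [apply G_dec; auto; lia|]. auto. }
  specialize (H m). pose proof (G_pos x (S m) Hx).
  assert (1 <= exp (4 / INR (S m))).
  { rewrite <- exp_0. apply exp_le. apply Rdiv_le_0_compat; [lra| apply lt_0_INR; lia]. }
  nra.
Qed.

Lemma Gamma_exists x : 0 < x -> x * (1 + x) <= 4 ->
  { Gm : R | Un_cv (gamma_seq x) Gm /\ 0 < Gm }.
Proof.
  intros Hx Hx4.
  set (g := fun m => gamma_seq x (S m)).
  assert (Hg : Un_growing g) by (intros m; unfold g; apply G_incr; auto; lia).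
  assert (Hb : has_ub g).
  { exists (gamma_seq x 1 * exp 4). intros y [i ->]. unfold g. apply G_bound; auto. }
  destruct (growing_cv g Hg Hb) as [Gm HG].
  exists Gm. split.
  - apply is_lim_seq_Reals. apply (proj2 (is_lim_seq_incr_1 _ _)).
    apply is_lim_seq_Reals. exact HG.
  - pose proof (growing_ineq g Gm Hg HG 0). unfold g in H.
    pose proof (G_pos x 1 Hx). lra.
Qed.

Lemma Qm_bound x m : 0 < x < 2 -> Rabs (Pr (- x - 1) (S m)) * INR (S m) <= 2.
Proof.
  intros Hx. induction m.
  - change (Pr (- x - 1) 1) with (1 * (1 + (- x - 1) / INR 1)). simpl INR.
    replace (1 * (1 + (- x - 1) / 1)) with (- x) by field.
    rewrite Rabs_Ropp, Rabs_pos_eq; lra.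
  - change (Pr (- x - 1) (S (S m))) with (Pr (- x - 1) (S m) * (1 + (- x - 1) / INR (S (S m)))).
    assert (HN : INR (S (S m)) = INR (S m) + 1) by apply S_INR.
    assert (1 <= INR (S m)) by (apply (le_INR 1); lia).
    rewrite Rabs_mult, Rmult_assoc.
    replace (Rabs (1 + (- x - 1) / INR (S (S m))) * INR (S (S m))) with (Rabs (INR (S m) - x)).
    2:{ replace (1 + (- x - 1) / INR (S (S m))) with ((INR (S m) - x) / INR (S (S m))) by (rewrite HN; field; lra).
        rewrite Rabs_div by lra. rewrite (Rabs_pos_eq (INR (S (S m)))) by lra. field. lra. }
    eapply Rle_trans; [|exact IHm]. apply Rmult_le_compat_l; [apply Rabs_pos|].
    apply Rabs_le. lra.
Qed.

Lemma Rpower_ratio x m : (1 <= m)%nat ->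
  Rpower (INR m) x / Rpower (INR (S m)) (x - 1) = INR (S m) / exp (x * delta m).
Proof.
  intros Hm. unfold Rpower, delta.
  assert (0 < INR (S m)) by (apply lt_0_INR; lia).
  rewrite <- (exp_ln (INR (S m))) at 2 by auto.
  unfold Rdiv. rewrite <- !exp_Ropp, <- !exp_plus. f_equal. ring.
Qed.

Lemma inv_lim : is_lim_seq (fun n => / INR (S n)) 0.
Proof.
  pose proof is_lim_seq_INR as H. apply is_lim_seq_incr_1 in H.
  apply is_lim_seq_inv in H; [|discriminate]. exact H.
Qed.

Lemma exp_lim (w : nat -> R) : is_lim_seq w 0 -> is_lim_seq (fun n => exp (w n)) 1.
Proof.
  intros H. rewrite <- exp_0. unfold is_lim_seq in *. simpl in *.
  eapply filterlim_comp; [exact H|]. apply continuous_exp.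
Qed.

Theorem mainTheorem8 :
  (forall n : nat, (1 <= n)%nat ->
     ED n = (1 + sqrt 2) / 2 * gbinom (INR n + sqrt 2 - 2) (n - 1)
            - (sqrt 2 - 1) / 2 * gbinom (INR n - sqrt 2 - 2) (n - 1))
  /\
  (exists GammaSqrt2 : R,
     Un_cv (gamma_seq (sqrt 2)) GammaSqrt2 /\
     Un_cv (fun n => ED n /
              ((1 + sqrt 2) / 2 * Rpower (INR n) (sqrt 2 - 1) / GammaSqrt2)) 1).
Proof.
  split.
  { intros n Hn. destruct n as [|m]; [lia|]. replace (S m - 1)%nat with m by lia. apply ED_formula. }
  set (x := sqrt 2).
  assert (Hs : x * x = 2) by (apply sqrt_sqrt; lra).
  assert (Hx : 0 < x) by (apply sqrt_lt_R0; lra).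
  assert (Hx2 : x < 2) by nra.
  assert (Hx4 : x * (1 + x) <= 4) by nra.
  destruct (Gamma_exists x Hx Hx4) as [Gm [HG HGp]].
  exists Gm. split; auto.
  set (c := (1 + x) / 2). set (d := (x - 1) / 2).
  assert (Hc : 0 < c) by (unfold c; lra).
  assert (HGs : is_lim_seq (fun n => gamma_seq x (S n)) Gm).
  { apply (proj1 (is_lim_seq_incr_1 (gamma_seq x) Gm)). apply is_lim_seq_Reals. exact HG. }
  apply is_lim_seq_Reals.
  apply (proj2 (is_lim_seq_incr_1 _ _)). apply (proj2 (is_lim_seq_incr_1 _ _)).
  set (A1 := fun n => Gm / gamma_seq x (S n)).
  set (A2 := fun n => INR (S (S n)) / (x + INR (S n))).
  set (A3 := fun n => 1 / exp (x * delta (S n))).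
  set (B := fun n => d / c * Gm * Pr (- x - 1) (S n) / Rpower (INR (S (S n))) (x - 1)).
  apply (is_lim_seq_ext (fun n => A1 n * A2 n * A3 n - B n)).
  { intros n. unfold A1, A2, A3, B.
    rewrite ED_formula. fold x.
    replace (INR (S (S n)) - x - 2) with (INR (S (S n)) + (- x) - 2) by ring.
    rewrite !Q_Pr. replace (-x - 1) with (- x - 1) by ring.
    rewrite (Pr_gamma x (S n)) by auto.
    pose proof (Rpower_ratio x (S n) ltac:(lia)) as RR.
    set (P := Rpower (INR (S (S n))) (x - 1)) in *.
    set (Rp := Rpower (INR (S n)) x) in *.
    set (E := exp (x * delta (S n))) in *.
    assert (HP : 0 < P) by apply Rpower_pos.
    assert (HE : 0 < E) by apply exp_pos.
    assert (HGn : 0 < gamma_seq x (S n)) by (apply G_pos; auto).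
    assert (HM : 0 < INR (S n)) by (apply lt_0_INR; lia).
    assert (HRp : Rp = INR (S (S n)) / E * P).
    { rewrite <- RR. field. lra. }
    rewrite HRp. fold c d. field. repeat split; lra. }
  replace 1 with (1 * 1 * 1 - 0) by ring.
  apply is_lim_seq_minus'; [apply is_lim_seq_mult'; [apply is_lim_seq_mult'|]|].
  - unfold A1. replace (Finite 1) with (Finite (Gm / Gm)) by (f_equal; field; lra).
    apply is_lim_seq_div'; [apply is_lim_seq_const| exact HGs | lra].
  - unfold A2.
    apply (is_lim_seq_ext (fun n => (1 + / INR (S n)) / (x * / INR (S n) + 1))).
    { intros n. assert (0 < INR (S n)) by (apply lt_0_INR; lia). rewrite (S_INR (S n)). field. lra. }
    replace (Finite 1) with (Finite ((1 + 0) / (x * 0 + 1))) by (f_equal; field).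
    apply is_lim_seq_div'; [| |lra].
    + apply is_lim_seq_plus'; [apply is_lim_seq_const| apply inv_lim].
    + apply is_lim_seq_plus'; [apply is_lim_seq_mult'; [apply is_lim_seq_const| apply inv_lim]| apply is_lim_seq_const].
  - unfold A3. replace (Finite 1) with (Finite (1 / 1)) by (f_equal; field).
    apply is_lim_seq_div'; [apply is_lim_seq_const| |lra].
    apply exp_lim.
    apply (is_lim_seq_le_le (fun _ => 0) _ (fun n => x * / INR (S n))).
    + intros n. pose proof (delta_bounds (S n) ltac:(lia)) as [D1 D2].
      assert (0 < / INR (S (S n))) by (apply Rinv_0_lt_compat, lt_0_INR; lia).
      split; [nra|]. apply Rmult_le_compat_l; lra.
    + apply is_lim_seq_const.
    + replace (Finite 0) with (Finite (x * 0)) by (f_equal; ring).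
      apply is_lim_seq_mult'; [apply is_lim_seq_const| apply inv_lim].
  - apply is_lim_seq_abs_0.
    set (K := Rabs (d / c * Gm)).
    apply (is_lim_seq_le_le (fun _ => 0) _ (fun n => 2 * K * / INR (S n))).
    + intros n. split; [apply Rabs_pos|]. unfold B.
      assert (HP : 1 <= Rpower (INR (S (S n))) (x - 1)).
      { unfold Rpower. apply Rle_trans with (exp 0); [rewrite exp_0; lra|]. apply exp_le.
        assert (0 <= ln (INR (S (S n)))).
        { rewrite <- ln_1. assert (2 <= INR (S (S n))) by (apply (le_INR 2); lia).
          left. apply ln_increasing; lra. }
        assert (1 < x) by nra. apply Rmult_le_pos; lra. }
      pose proof (Qm_bound x n ltac:(lra)) as QB.
      assert (HM : 0 < INR (S n)) by (apply lt_0_INR; lia).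
      assert (K0 : 0 <= K) by apply Rabs_pos.
      assert (HK : Rabs d * Rabs (/ c) * Rabs Gm = K) by (unfold K, Rdiv; rewrite !Rabs_mult; ring).
      unfold Rdiv. rewrite !Rabs_mult. rewrite HK.
      rewrite (Rabs_pos_eq (/ Rpower _ _)) by (left; apply Rinv_0_lt_compat; lra).
      assert (Hq : Rabs (Pr (- x - 1) (S n)) <= 2 * / INR (S n)).
      { apply (Rmult_le_reg_r (INR (S n))); auto. rewrite Rmult_assoc, Rinv_l by lra. lra. }
      assert (0 < / Rpower (INR (S (S n))) (x - 1) <= 1).
      { split. apply Rinv_0_lt_compat; lra. apply Rle_trans with (/ 1); [apply Rinv_le_contravar; lra | rewrite Rinv_1; lra]. }
      assert (0 <= Rabs (Pr (- x - 1) (S n))) by apply Rabs_pos.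
      set (q := Rabs (Pr (- x - 1) (S n))) in *. set (r := / Rpower (INR (S (S n))) (x - 1)) in *.
      assert (K * q * r <= K * q * 1) by (apply Rmult_le_compat_l; [apply Rmult_le_pos|]; lra).
      assert (K * q <= K * (2 * / INR (S n))) by (apply Rmult_le_compat_l; lra).
      lra.
    + apply is_lim_seq_const.
    + replace (Finite 0) with (Finite (2 * K * 0)) by (f_equal; ring).
      apply is_lim_seq_mult'; [apply is_lim_seq_const| apply inv_lim].
Qed.
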